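(* Let $\varepsilon\in(0,1]$, let $\mathcal D$ be a distribution on $\mathbb R^d$, let $f:\mathbb R^d\to\{0,1\}$ be measurable, and let $S=\{x_1,\dots,x_N\}\subset\mathbb R^d$. For a matrix $A$ write $\mathcal L(A)=\mathbb E_{x\sim\mathcal D}\sum_{i=1}^N p_{S,A}(x_i,x)\,|f(x_i)-f(x)|$. Then $$\Big|\min_{A\in\mathcal A_\varepsilon}\mathcal L(A)-\inf_{A\in\mathcal A}\mathcal L(A)\Big|\le15\,\varepsilon.$$
   Context: $K_A(x,y)=\frac{1}{1+\|A(x-y)\|_2^2}$ and $p_{S,A}(x_i,x)=\frac{K_A(x_i,x)}{\sum_{j=1}^N K_A(x_j,x)}$. $\mathcal A$ is the set of diagonal $d\times d$ real matrices whose diagonal entries all lie in $[1,2]$. $\mathcal A_\varepsilon$ is the finite set of diagonal $d\times d$ matrices whose diagonal entries all lie in $G_\varepsilon=\{(1+\varepsilon)^k: k\in\mathbb Z_{\ge0},\ (1+\varepsilon)^k\le2\}$. *)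

(* Defs.v *)
From HB Require Import structures.
From mathcomp Require Import all_boot all_order all_algebra.
From mathcomp Require Import all_classical all_reals all_analysis.
Set Implicit Arguments. Unset Strict Implicit. Unset Printing Implicit Defensive.
Import Order.TTheory GRing.Theory Num.Theory.
Local Open Scope ring_scope.
Local Open Scope classical_set_scope.

(* Points of R^d are d.-tuples of reals; d.-tuple R carries the library's
   product (Borel) sigma-algebra generated by the coordinate projections. *)

Definition sqnormA {R : realType} {d : nat} (A : 'M[R]_d) (x y : d.-tuple R) : R :=
  \sum_(i < d) (\sum_(j < d) A i j * (tnth x j - tnth y j)) ^+ 2.

Definition KA {R : realType} {d : nat} (A : 'M[R]_d) (x y : d.-tuple R) : R :=
  (1 + sqnormA A x y)^-1.

Definition pSA {R : realType} {d N : nat} (S : 'I_N -> d.-tuple R)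
  (A : 'M[R]_d) (xi x : d.-tuple R) : R :=
  KA A xi x / \sum_(j < N) KA A (S j) x.

Definition diagA {R : realType} (d : nat) : set 'M[R]_d :=
  [set A | is_diag_mx A /\ forall i, 1 <= A i i <= 2].

Definition Geps {R : realType} (eps : R) : set R :=
  [set r | exists k : nat, r = (1 + eps) ^+ k /\ (1 + eps) ^+ k <= 2].

Definition diagAeps {R : realType} (d : nat) (eps : R) : set 'M[R]_d :=
  [set A | is_diag_mx A /\ forall i, Geps eps (A i i)].

(* L(A) = E_{x ~ D} sum_i p_{S,A}(x_i,x) |f(x_i) - f(x)|
   (the integrand lies in [0,1], so the integral is finite and we take its
   real value) *)
Definition lossL {R : realType} {d N : nat}
  (D : probability (d.-tuple R) R) (f : d.-tuple R -> R)
  (S : 'I_N -> d.-tuple R) (A : 'M[R]_d) : R :=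
  fine (\int[D]_x (\sum_(i < N) pSA S A (S i) x * `|f (S i) - f x|)%:E)%E.

Arguments diagA {R} d.
Arguments diagAeps {R} d eps.

(* Main.v *)
Set Warnings "-all".
Require Import Defs.
From HB Require Import structures.
From mathcomp Require Import all_boot all_order all_algebra.
From mathcomp Require Import all_classical all_reals all_analysis.
From mathcomp Require Import lra.
Import Order.TTheory GRing.Theory Num.Theory.
Local Open Scope ring_scope.
Local Open Scope classical_set_scope.
Section M.
Context {R : realType} {d N : nat}.

Lemma sqnorm_ge0 (A : 'M[R]_d) x y : 0 <= sqnormA A x y.
Proof. by apply: sumr_ge0 => i _; exact: sqr_ge0. Qed.

Lemma KA_gt0 (A : 'M[R]_d) x y : 0 < KA A x y.
Proof. by rewrite /KA invr_gt0 ltr_wpDr ?sqnorm_ge0. Qed.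

Lemma meas_sqnorm (A : 'M[R]_d) y :
  measurable_fun setT (fun x : d.-tuple R => sqnormA A y x).
Proof.
rewrite /sqnormA; apply: measurable_sum => i.
apply: measurable_realfun.measurable_funX; apply: measurable_sum => j.
apply: measurable_realfun.measurable_funM => //; apply: measurable_realfun.measurable_funB => //.
exact: measurable_tnth.
Qed.

Lemma meas_inv : measurable_fun (`]0, +oo[ : set R) (@GRing.inv R).
Proof.
apply: measurable_realfun.open_continuous_measurable_fun.
  exact: interval_open.
move=> x; rewrite inE /= in_itv /= andbT => x0.
by apply: inv_continuous; rewrite gt_eqF.
Qed.

Lemma meas_KA (A : 'M[R]_d) y :
  measurable_fun setT (fun x : d.-tuple R => KA A y x).
Proof.
rewrite /KA.
apply: (measurable_comp (F := (`]0, +oo[ : set R))) => //.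
- by move=> _ [x _ <-]; rewrite /= in_itv /= andbT ltr_wpDr ?sqnorm_ge0.
- exact: meas_inv.
- by apply: measurable_realfun.measurable_funD => //; exact: meas_sqnorm.
Qed.

End M.

Lemma bernoulli_le {R : realType} (e : R) n : 0 <= e -> 1 + n%:R * e <= (1 + e) ^+ n.
Proof.
move=> e0; elim: n => [|n IH]; first by rewrite mul0r addr0 expr0.
rewrite exprS -natr1 mulrDl mul1r.
have h : 0 <= n%:R * e by rewrite mulr_ge0.
have h2 : 1 <= (1 + e) ^+ n by rewrite exprn_ege1 // lerDl.
nra.
Qed.

Lemma grid_exists {R : realType} (e a : R) : 0 < e -> 1 <= a <= 2 ->
  exists k : nat, (1 + e) ^+ k <= a /\ a <= (1 + e) * (1 + e) ^+ k.
Proof.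
move=> e0 /andP[a1 a2].
have Q : forall n, (exists k : nat, (1 + e) ^+ k <= a /\ a <= (1 + e) * (1 + e) ^+ k)
    \/ (1 + e) ^+ n <= a.
  elim=> [|n [IH|IH]]; first by right; rewrite expr0.
  - by left.
  - have [h|h] := leP a ((1 + e) ^+ n.+1).
      by left; exists n; split => //; rewrite -exprS.
    by right; exact: ltW.
have [n hn] : exists n : nat, 1 < n%:R * e.
  exists (Num.Def.trunc e^-1).+1.
  have h := truncnS_gt e^-1.
  by rewrite -(ltr_pM2r e0) mulVf ?gt_eqF in h.
case: (Q n) => // h.
have := bernoulli_le e n (ltW e0); lra.
Qed.

Section P.
Context {R : realType} {d N : nat}.

Lemma sqnorm_diag (A : 'M[R]_d) x y : is_diag_mx A ->
  sqnormA A x y = \sum_(i < d) (A i i * (tnth x i - tnth y i)) ^+ 2.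
Proof.
move=> dA; apply: eq_bigr => i _; congr (_ ^+ 2).
rewrite (bigD1 i) //= big1 ?addr0 // => j ji.
have := dA; move/forallP/(_ i)/forallP/(_ j)/implyP.
rewrite eq_sym in ji.
by move/(_ ji)/eqP ->; rewrite mul0r.
Qed.

Lemma inv_le_scale (a b k : R) : 0 < a -> 0 < b -> b <= k * a -> a^-1 <= k * b^-1.
Proof.
move=> a0 b0 h.
have h1 : a * a^-1 = 1 by rewrite mulfV ?gt_eqF.
have h2 : b * b^-1 = 1 by rewrite mulfV ?gt_eqF.
have u0 : 0 < a^-1 by rewrite invr_gt0.
have v0 : 0 < b^-1 by rewrite invr_gt0.
have huv : 0 <= a^-1 * b^-1 by rewrite mulr_ge0 // ltW.
nra.
Qed.

Lemma KA_cmp (A A' : 'M[R]_d) (c : R) x y : is_diag_mx A -> is_diag_mx A' ->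
  1 <= c -> (forall i, 0 <= A' i i <= A i i /\ A i i <= c * A' i i) ->
  KA A x y <= KA A' x y /\ KA A' x y <= c ^+ 2 * KA A x y.
Proof.
move=> dA dA' c1 hA.
have q0 := sqnorm_ge0 A' x y.
have hle : sqnormA A' x y <= sqnormA A x y.
  rewrite !sqnorm_diag //; apply: ler_sum => i _.
  have [/andP[h0 h1] h2] := hA i.
  rewrite !exprMn; apply: ler_wpM2r; first exact: sqr_ge0.
  by rewrite !expr2; nra.
have hge : sqnormA A x y <= c ^+ 2 * sqnormA A' x y.
  rewrite !sqnorm_diag // mulr_sumr; apply: ler_sum => i _.
  have [/andP[h0 h1] h2] := hA i.
  have hh : A i i ^+ 2 <= c ^+ 2 * A' i i ^+ 2 by rewrite -exprMn !expr2; nra.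
  rewrite !exprMn [c ^+ 2 * _]mulrA; apply: ler_wpM2r => //; exact: sqr_ge0.
rewrite /KA; split.
  by rewrite lef_pV2 ?posrE ?ltr_wpDr ?sqnorm_ge0 // lerD2l.
apply: inv_le_scale; rewrite ?ltr_wpDr ?sqnorm_ge0 //.
have c2 : 1 <= c ^+ 2 by rewrite exprn_ege1.
nra.
Qed.

End P.

Section G.
Context {R : realType} {d N : nat} (S : 'I_N -> d.-tuple R) (f : d.-tuple R -> R).

Definition gfun (A : 'M[R]_d) (x : d.-tuple R) : R :=
  \sum_(i < N) pSA S A (S i) x * `|f (S i) - f x|.

Lemma KA_ge0 (A : 'M[R]_d) x y : 0 <= KA A x y.
Proof. exact: ltW (KA_gt0 _ _ _). Qed.

Lemma pSA_ge0 A y x : 0 <= pSA S A y x.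
Proof.
rewrite /pSA divr_ge0 ?KA_ge0 //.
by apply: sumr_ge0 => j _; exact: KA_ge0.
Qed.

Lemma gfun_ge0 A x : 0 <= gfun A x.
Proof.
apply: sumr_ge0 => i _; apply: mulr_ge0 => //.
exact: pSA_ge0.
Qed.

Lemma gfun_le1 A x : (forall z, f z = 0 \/ f z = 1) -> gfun A x <= 1.
Proof.
move=> f01.
apply: (@le_trans _ _ (\sum_(i < N) pSA S A (S i) x)).
  apply: ler_sum => i _; rewrite -[X in _ <= X]mulr1; apply: ler_wpM2l.
    exact: pSA_ge0.
  by case: (f01 (S i)) => ->; case: (f01 x) => ->; rewrite ?subrr ?normr0 ?sub0r ?subr0 ?normrN ?normr1.
rewrite /pSA -mulr_suml.
set s := \sum_(j < N) _.
have [->|s0] := eqVneq s 0; first by rewrite mul0r.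
by rewrite mulfV.
Qed.

Lemma gfun_cmp (A A' : 'M[R]_d) (c : R) x : is_diag_mx A -> is_diag_mx A' ->
  1 <= c -> (forall i, 0 <= A' i i <= A i i /\ A i i <= c * A' i i) ->
  gfun A' x <= c ^+ 2 * gfun A x.
Proof.
move=> dA dA' c1 hA.
rewrite /gfun mulr_sumr; apply: ler_sum => i _.
rewrite mulrA; apply: ler_wpM2r => //.
rewrite /pSA mulrA.
have sA0 : 0 < \sum_(j < N) KA A (S j) x.
  by rewrite (bigD1 i) //= ltr_wpDr ?KA_gt0 //; apply: sumr_ge0 => j _; exact: KA_ge0.
apply: ler_pM.
- exact: KA_ge0.
- by rewrite invr_ge0; apply: sumr_ge0 => j _; exact: KA_ge0.
- by have [] := KA_cmp A A' c (S i) x dA dA' c1 hA.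
- rewrite lef_pV2 ?posrE //.
    by apply: ler_sum => j _; have [] := KA_cmp A A' c (S j) x dA dA' c1 hA.
  by apply: (lt_le_trans sA0); apply: ler_sum => j _; have [] := KA_cmp A A' c (S j) x dA dA' c1 hA.
Qed.

Lemma meas_gfun A : measurable_fun setT f -> measurable_fun setT (gfun A).
Proof.
move=> mf; rewrite /gfun; apply: measurable_sum => i.
apply: measurable_realfun.measurable_funM.
  rewrite /pSA; apply: measurable_realfun.measurable_funM; first exact: meas_KA.
  apply: (measurable_comp (F := (`]0, +oo[ : set R))) => //.
  - move=> _ [x _ <-]; rewrite /= in_itv /= andbT.
    by rewrite (bigD1 i) //= ltr_wpDr ?KA_gt0 //; apply: sumr_ge0 => j _; exact: KA_ge0.
  - exact: meas_inv.
  - by apply: measurable_sum => j; exact: meas_KA.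
apply: measurableT_comp => //.
by apply: measurable_realfun.measurable_funB.
Qed.

End G.

Section I.
Context {R : realType} {d : measure_display} {T : measurableType d}.
Variable (D : probability T R).
Local Open Scope ereal_scope.

Lemma int_bounds (g : T -> R) : measurable_fun setT g ->
  (forall x, (0 <= g x <= 1)%R) ->
  (\int[D]_x (g x)%:E) \is a fin_num /\ (0 <= fine (\int[D]_x (g x)%:E) <= 1)%R.
Proof.
move=> mg hg.
have i0 : 0 <= \int[D]_x (g x)%:E.
  by apply: integral_ge0 => x _; rewrite lee_fin; have /andP[] := hg x.
have i1 : \int[D]_x (g x)%:E <= 1.
  apply: (@le_trans _ _ (\int[D]_x (cst 1%E) x)).
    apply: ge0_le_integral => //.
    - by move=> x _; rewrite lee_fin; have /andP[] := hg x.
    - exact/measurable_realfun.measurable_EFinP.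
    - by move=> x _; rewrite /= lee_fin; have /andP[] := hg x.
  by rewrite integral_cst // mul1e; apply: probability_le1.
have fi : \int[D]_x (g x)%:E \is a fin_num.
  by rewrite ge0_fin_numE // (le_lt_trans i1) // ltey.
split => //.
by rewrite -lee_fin -lee_fin fineK // i0 i1.
Qed.

Lemma int_cmp (g1 g2 : T -> R) (c : R) : measurable_fun setT g1 ->
  measurable_fun setT g2 -> (forall x, 0 <= g1 x)%R -> (forall x, 0 <= g2 x)%R ->
  (0 <= c)%R -> (forall x, g1 x <= c * g2 x)%R ->
  \int[D]_x (g1 x)%:E <= c%:E * \int[D]_x (g2 x)%:E.
Proof.
move=> m1 m2 h1 h2 c0 h12.
rewrite -ge0_integralZl_EFin //; last first.
- exact/measurable_realfun.measurable_EFinP.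
- by move=> x _; rewrite lee_fin.
apply: ge0_le_integral => //.
- by move=> x _; rewrite lee_fin.
- exact/measurable_realfun.measurable_EFinP.
- apply: emeasurable_funM => //; exact/measurable_realfun.measurable_EFinP.
- by move=> x _; rewrite -EFinM lee_fin.
Qed.

End I.

Lemma lossL_cmp {R : realType} {d N : nat} (D : probability (d.-tuple R) R)
  (f : d.-tuple R -> R) (S : 'I_N -> d.-tuple R) (A A' : 'M[R]_d) (c : R) :
  measurable_fun setT f -> (forall x, f x = 0 \/ f x = 1) ->
  is_diag_mx A -> is_diag_mx A' ->
  1 <= c -> (forall i, 0 <= A' i i <= A i i /\ A i i <= c * A' i i) ->
  0 <= lossL D f S A <= 1 /\ lossL D f S A' <= c ^+ 2 * lossL D f S A.
Proof.
move=> mf f01 dA dA' c1 hA.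
have hb B x : (0 <= gfun S f B x <= 1) by rewrite gfun_ge0 gfun_le1.
have [fA bA] := int_bounds D (gfun S f A) (meas_gfun S f A mf) (hb A).
have [fA' bA'] := int_bounds D (gfun S f A') (meas_gfun S f A' mf) (hb A').
split; first exact: bA.
rewrite /lossL -lee_fin EFinM.
rewrite (fineK fA) (fineK fA').
apply: int_cmp.
- exact: meas_gfun.
- exact: meas_gfun.
- exact: gfun_ge0.
- exact: gfun_ge0.
- by rewrite exprn_ge0 // (le_trans ler01).
- by move=> x; apply: gfun_cmp.
Qed.

Definition gridM {R : realType} {d : nat} (e : R) (kf : 'I_d -> nat) : 'M[R]_d :=
  \matrix_(i, j) if i == j then (1 + e) ^+ kf i else 0.

Lemma gridM_diag {R : realType} {d : nat} (e : R) kf : is_diag_mx (@gridM R d e kf).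
Proof.
apply/forallP => i; apply/forallP => j; apply/implyP => ne.
rewrite mxE ifF //; apply/negbTE; by apply: contraNneq ne => ->.
Qed.

Lemma gridM_ii {R : realType} {d : nat} (e : R) kf i : @gridM R d e kf i i = (1 + e) ^+ kf i.
Proof. by rewrite mxE eqxx. Qed.

Lemma lossL_bounds {R : realType} {d N : nat} (D : probability (d.-tuple R) R)
  (f : d.-tuple R -> R) (S : 'I_N -> d.-tuple R) (A : 'M[R]_d) :
  measurable_fun setT f -> (forall x, f x = 0 \/ f x = 1) ->
  0 <= lossL D f S A <= 1.
Proof.
move=> mf f01.
have hb B x : (0 <= gfun S f B x <= 1) by rewrite gfun_ge0 gfun_le1.
by have [] := int_bounds D (gfun S f A) (meas_gfun S f A mf) (hb A).
Qed.

Theorem mainTheorem12 (R : realType) (d N : nat) (eps : R)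
  (D : probability (d.-tuple R) R) (f : d.-tuple R -> R)
  (S : 'I_N -> d.-tuple R) :
  0 < eps <= 1 ->
  measurable_fun setT f ->
  (forall x, f x = 0 \/ f x = 1) ->
  injective S ->
  `| inf [set lossL D f S A | A in diagAeps d eps]
     - inf [set lossL D f S A | A in diagA d] | <= 15 * eps.
Proof.
move=> /andP[e0 e1] mf f01 _.
set E1 := [set lossL D f S A | A in diagAeps d eps].
set E2 := [set lossL D f S A | A in diagA d].
have c1 : 1 <= 1 + eps by rewrite lerDl ltW.
have grid_in A : diagAeps d eps A -> diagA d A.
  move=> [dA hA]; split => // i; have [k [-> k2]] := hA i.
  by rewrite k2 exprn_ege1.
have Lb A := @lossL_bounds R d N D f S A mf f01.
have E1n : E1 !=set0.
  exists (lossL D f S (gridM eps (fun _ => 0%N))), (gridM eps (fun _ => 0%N)) => //.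
  split; first exact: gridM_diag.
  by move=> i; rewrite gridM_ii; exists 0%N; rewrite expr0 ler1n.
have E2n : E2 !=set0.
  by case: E1n => _ [A hA _]; exists (lossL D f S A), A => //; exact: grid_in.
have lbE1 : has_lbound E1 by exists 0 => _ [A _ <-]; have /andP[] := Lb A.
have lbE2 : has_lbound E2 by exists 0 => _ [A _ <-]; have /andP[] := Lb A.
have h21 : inf E2 <= inf E1.
  apply: lb_le_inf => // _ [A hA <-]; apply: ge_inf => //.
  by exists A => //; exact: grid_in.
have h12 : inf E1 - 3 * eps <= inf E2.
  apply: lb_le_inf => // _ [A [dA hA] <-].
  have H i : exists k : nat, (1 + eps) ^+ k <= A i i /\ A i i <= (1 + eps) * (1 + eps) ^+ k.
    by apply: grid_exists => //; have := hA i.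
  pose kf i := proj1_sig (cid (H i)).
  have hk i : (1 + eps) ^+ kf i <= A i i /\ A i i <= (1 + eps) * (1 + eps) ^+ kf i.
    exact: proj2_sig (cid (H i)).
  set A' := gridM eps kf.
  have dA' : is_diag_mx A' by exact: gridM_diag.
  have [_ hc] := @lossL_cmp R d N D f S A A' (1 + eps) mf f01 dA dA' c1
    (fun i => ltac:(rewrite gridM_ii; have [k1 k2] := hk i;
       by rewrite k1 k2 exprn_ge0 // (le_trans ler01))).
  have hI : inf E1 <= lossL D f S A'.
    apply: ge_inf => //; exists A' => //; split => // i.
    rewrite gridM_ii; exists (kf i); split => //.
    have [k1 _] := hk i; apply: le_trans k1 _; by have /andP[] := hA i.
  have /andP[l0 l1] := Lb A.
  rewrite lerBlDr; apply: (le_trans hI); apply: (le_trans hc).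
  nra.
rewrite ler_norml; apply/andP; split; lra.
Qed.
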